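(* Let $h\ge 3$ and let $W\in\mathcal W^2_{h\times 3}$ be $2$-full. Then: (i) $W[1]=(\blacksquare,\blacksquare,\blacksquare)$ and $W[2]=(\blacksquare,\square,\blacksquare)$; (ii) if $W$ is atomic, then $|W[i]|_\blacksquare=2$ for all $1<i<h$; (iii) if $W$ is atomic, there are no $i$ with $1<i<h-1$ and $j\in\{1,2\}$ such that the four cells $(i,j),(i,j+1),(i+1,j),(i+1,j+1)$ are all filled; (iv) if $W$ is atomic, neither column $W^t[1]$ nor column $W^t[3]$ contains two vertically consecutive empty cells.
   Context: A 2-dimensional binary word of dimensions $h\times w$ is an $h\times w$ matrix $W$ with entries in $\{\square,\blacksquare\}$; entries $\blacksquare$ are filled cells, entries $\square$ empty cells, and $|U|_\blacksquare$ is the number of filled cells of $U$. Two cells $(i,j),(i',j')$ are adjacent if $|i-i'|+|j-j'|=1$; the degree of a filled cell is the number of filled cells adjacent to it. $\mathcal W^2_{h\times w}$ is the set of $h\times w$ binary words in which every filled cell has degree at most $2$; $W\in\mathcal W^2_{h\times w}$ is $2$-full if $|W|_\blacksquare$ is maximal among words of $\mathcal W^2_{h\times w}$. $W[i]$ denotes the $i$-th row of $W$ and $W^t[j]$ its $j$-th column. A word $W\in\mathcal W^2_{h\times w}$ is atomic if no row of $W$ consists only of empty cells. *)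

(* Defs.v *)
(* A 2-dimensional binary word of dimensions h x w is a
   matrix 'M[bool]_(h, w); true = filled cell, false = empty cell.
   Indices are 0-based in Rocq (paper row i  <->  Rocq row i-1). *)
From mathcomp Require Import all_boot all_order all_algebra.
Set Implicit Arguments. Unset Strict Implicit. Unset Printing Implicit Defensive.

Definition word (h w : nat) := 'M[bool]_(h, w).

Definition adjacent (h w : nat) (p q : 'I_h * 'I_w) : bool :=
  (`|(val p.1 : int) - (val q.1 : int)|%N + `|(val p.2 : int) - (val q.2 : int)|%N == 1)%N.

Definition degree (h w : nat) (W : word h w) (i : 'I_h) (j : 'I_w) : nat :=
  #|[set q : 'I_h * 'I_w | W q.1 q.2 && adjacent (i, j) q]|.

Definition nfilled (h w : nat) (W : word h w) : nat :=
  #|[set p : 'I_h * 'I_w | W p.1 p.2]|.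

Definition inW2 (h w : nat) (W : word h w) : Prop :=
  forall (i : 'I_h) (j : 'I_w), W i j -> (degree W i j <= 2)%N.

Definition two_full (h w : nat) (W : word h w) : Prop :=
  inW2 W /\ forall V : word h w, inW2 V -> (nfilled V <= nfilled W)%N.

Definition atomic (h w : nat) (W : word h w) : Prop :=
  forall i : 'I_h, exists j : 'I_w, W i j.

(* total 0-based cell accessor: W i j if (i, j) is inside the word, else false *)
Definition cell (h w : nat) (W : word h w) (i j : nat) : bool :=
  match @insub _ (fun k => k < h) _ i, @insub _ (fun k => k < w) _ j with
  | Some a, Some b => W a b
  | _, _ => false
  end.

Definition row_count (h w : nat) (W : word h w) (i : 'I_h) : nat :=
  #|[set j : 'I_w | W i j]|.

(* Main.v *)
Require Import Defs.
From mathcomp Require Import all_boot all_order all_algebra zify.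
Set Implicit Arguments. Unset Strict Implicit. Unset Printing Implicit Defensive.

Section Basics.
Variables (h w : nat) (W : word h w).

Lemma cell_ord (a : 'I_h) (b : 'I_w) : cell W a b = W a b.
Proof.
rewrite /cell; case: insubP => [a' _ Ea|]; last by rewrite ltn_ord.
case: insubP => [b' _ Eb|]; last by rewrite ltn_ord.
by congr (W _ _); apply: val_inj.
Qed.

Lemma cell_oobi i j : h <= i -> cell W i j = false.
Proof. by rewrite /cell; case: insubP => // a' ha; rewrite leqNgt ha. Qed.

Lemma cell_oobj i j : w <= j -> cell W i j = false.
Proof.
rewrite /cell; case: insubP => // a' _ _; case: insubP => // b' hb.
by rewrite leqNgt hb.
Qed.

Lemma card_set_sum (T : finType) (P : pred T) : #|[set x | P x]| = \sum_x P x.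
Proof.
rewrite -sum1_card big_mkcond; apply: eq_bigr => x _; rewrite inE.
by case: (P x).
Qed.

Lemma sum_cell (i k : nat) :
  \sum_(q : 'I_h * 'I_w) (W q.1 q.2 && (q.1 == i :> nat) && (q.2 == k :> nat)) = cell W i k.
Proof.
case: (ltnP i h) => hi; last first.
  rewrite cell_oobi // big1 // => q _.
  have := ltn_ord q.1; case: (nat_of_ord q.1 =P i) => [->|_]; last by rewrite andbF.
  by rewrite ltnNge hi.
case: (ltnP k w) => hk; last first.
  rewrite cell_oobj // big1 // => q _.
  have := ltn_ord q.2; case: (nat_of_ord q.2 =P k) => [->|_]; last by rewrite andbF.
  by rewrite ltnNge hk.
rewrite (bigD1 (Ordinal hi, Ordinal hk)) //= big1 ?addn0.
  by rewrite !eqxx !andbT -(cell_ord (Ordinal hi) (Ordinal hk)).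
move=> [a b] /= /negbTE H.
case: eqP => Ea; case: eqP => Eb; rewrite ?andbF //.
suff E : (a, b) = (Ordinal hi, Ordinal hk) by rewrite E eqxx in H.
by congr (_, _); apply: val_inj.
Qed.

End Basics.

Lemma pw (a b i j : nat) :
  ((`|(i:int) - (a:int)|%N + `|(j:int) - (b:int)|%N == 1)%N : nat) =
  (if i is i'.+1 then (a == i') && (b == j) else false) + ((a == i.+1) && (b == j))
  + (if j is j'.+1 then (a == i) && (b == j') else false) + ((a == i) && (b == j.+1)).
Proof.
case: i => [|i]; case: j => [|j]; repeat (case: eqP => ?); simpl; lia.
Qed.

Definition nbs h w (W : word h w) (i j : nat) : nat :=
  (if i is i'.+1 then cell W i' j else false) + cell W i.+1 j +
  (if j is j'.+1 then cell W i j' else false) + cell W i j.+1.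

Lemma degree_nbs h w (W : word h w) (i : 'I_h) (j : 'I_w) : degree W i j = nbs W i j.
Proof.
rewrite /degree card_set_sum.
under eq_bigr => q _.
  rewrite /adjacent /=.
  have -> : ((W q.1 q.2 && (`|(i:int) - (q.1:int)|%N + `|(j:int) - (q.2:int)|%N == 1)%N) : nat)
    = (if nat_of_ord i is i'.+1 then W q.1 q.2 && (q.1 == i' :> nat) && (q.2 == j :> nat) else false)
      + (W q.1 q.2 && (q.1 == i.+1 :> nat) && (q.2 == j :> nat))
      + (if nat_of_ord j is j'.+1 then W q.1 q.2 && (q.1 == i :> nat) && (q.2 == j' :> nat) else false)
      + (W q.1 q.2 && (q.1 == i :> nat) && (q.2 == j.+1 :> nat)).
    have := pw q.1 q.2 i j.
    case: (W q.1 q.2) => H; first by rewrite !andTb.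
    by case: (nat_of_ord i) => [|i']; case: (nat_of_ord j) => [|j'].
  over.
rewrite !big_split /= !sum_cell /nbs.
congr (_ + _ + _ + _).
  by case: (nat_of_ord i) => [|i'] /=; [rewrite big1|rewrite sum_cell].
by case: (nat_of_ord j) => [|j'] /=; [rewrite big1|rewrite sum_cell].
Qed.

Definition row3 := (bool * bool * bool)%type.
Definition rw h (W : word h 3) (i : nat) : row3 := (cell W i 0, cell W i 1, cell W i 2).
Definition zr : row3 := (false, false, false).
Definition pre h (W : word h 3) (i : nat) : row3 := if i is i'.+1 then rw W i' else zr.
Definition rc (x : row3) : nat := let: (a, b, c) := x in a + b + c.
Definition valid3 (a b c : row3) : bool :=
  let: (a0, a1, a2) := a in let: (b0, b1, b2) := b in let: (c0, c1, c2) := c in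
  [&& b0 ==> (a0 + c0 + b1 <= 2), b1 ==> (a1 + c1 + b0 + b2 <= 2)
    & b2 ==> (a2 + c2 + b1 <= 2)].

Lemma inW2_rows h (W : word h 3) :
  inW2 W <-> forall i, i < h -> valid3 (pre W i) (rw W i) (rw W i.+1).
Proof.
split.
  move=> H i hi.
  have K j (hj : j < 3) : cell W i j -> nbs W i j <= 2.
    move=> c; have := H (Ordinal hi) (Ordinal hj).
    rewrite -(cell_ord W (Ordinal hi) (Ordinal hj)) /= => /(_ c).
    by rewrite (degree_nbs W (Ordinal hi) (Ordinal hj)).
  have K0 := K 0 isT; have K1 := K 1 isT; have K2 := K 2 isT.
  clear K; move: K0 K1 K2; rewrite /nbs /valid3 /rw /pre (cell_oobj W i (j:=3)) //.
  case: i hi => [|i] hi /= K0 K1 K2; (apply/and3P; split; apply/implyP => c;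
    [move: (K0 c) | move: (K1 c) | move: (K2 c)]; rewrite ?c /=; lia).
move=> H a b Wab; rewrite degree_nbs.
have := H a (ltn_ord a).
have Hc := cell_ord W a b; rewrite Wab in Hc.
move: Hc; case: b Wab => [[|[|[|k]]] hb] //= _ Hc;
rewrite /nbs /valid3 /rw /pre ?(cell_oobj W a (j:=3)) // Hc;
case: (nat_of_ord a) => [|a'] /=; lia.
Qed.

Lemma nfilled_rows h (W : word h 3) : nfilled W = \sum_(0 <= i < h) rc (rw W i).
Proof.
rewrite /nfilled card_set_sum -(pair_bigA _ (fun i j => (W i j : nat))) big_mkord.
apply: eq_bigr => i _; rewrite !big_ord_recl big_ord0 /rw /= addn0.
have e0 : cell W i 0 = W i ord0 := cell_ord W i ord0.
have e1 : cell W i 1 = W i (lift ord0 ord0) := cell_ord W i (lift ord0 ord0).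
have e2 : cell W i 2 = W i (lift ord0 (lift ord0 ord0)) := cell_ord W i (lift ord0 (lift ord0 ord0)).
by rewrite e0 e1 e2 addnA.
Qed.

Lemma row_count_rw h (W : word h 3) (i : 'I_h) : row_count W i = rc (rw W i).
Proof.
rewrite /row_count card_set_sum !big_ord_recl big_ord0 /rw /= addn0.
have e0 : cell W i 0 = W i ord0 := cell_ord W i ord0.
have e1 : cell W i 1 = W i (lift ord0 ord0) := cell_ord W i (lift ord0 ord0).
have e2 : cell W i 2 = W i (lift ord0 (lift ord0 ord0)) := cell_ord W i (lift ord0 (lift ord0 ord0)).
by rewrite e0 e1 e2 addnA.
Qed.

Lemma rw_oob h (W : word h 3) i : h <= i -> rw W i = zr.
Proof. by move=> hi; rewrite /rw !cell_oobi. Qed.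

Lemma atomic_nz h (W : word h 3) : atomic W -> forall i, i < h -> rw W i != zr.
Proof.
move=> A i hi; have [j Hj] := A (Ordinal hi).
have := cell_ord W (Ordinal hi) j; rewrite Hj /rw /=.
case: j Hj => [[|[|[|k]]] hk] //= _ E; apply/negP => /eqP [E0 E1 E2]; congruence.
Qed.

Definition code (x : row3) : nat := let: (a, b, c) := x in a + 2 * b + 4 * c.
Definition Ft := [:: 3; 3; 3; 3; 3; 3; 3; 3; 3; 3; 3; 3; 3; 3; 3; 3; 3; 3; 3; 3; 3; 3; 3; 3; 4; 4; 4; 3; 4; 4; 4; 3; 3; 3; 3; 3; 3; 3; 3; 3; 4; 4; 4; 4; 4; 4; 4; 4; 4; 4; 4; 4; 4; 4; 3; 3; 5; 4; 0; 0; 4; 4; 0; 0].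
Definition Qt := [:: 3; 3; 3; 4; 3; 4; 4; 5; 3; 3; 3; 4; 3; 4; 4; 4; 3; 3; 3; 4; 3; 4; 4; 0; 3; 3; 3; 3; 3; 4; 4; 0; 3; 3; 3; 4; 3; 4; 4; 4; 3; 3; 3; 4; 3; 4; 4; 4; 3; 3; 3; 4; 3; 4; 3; 0; 3; 3; 3; 3; 3; 4; 3; 0].
Definition Fv (a b : row3) : nat := nth 0 Ft (code a * 8 + code b).
Definition Qv (a b : row3) : nat := nth 0 Qt (code a * 8 + code b).
Definition good (a b : row3) : bool := 8 <= Fv a b + Qv a b.
Definition blk (b c : row3) : bool :=
  let: (b0, b1, b2) := b in let: (c0, c1, c2) := c in
  (b0 && b1 && c0 && c1) || (b1 && b2 && c1 && c2).
Definition ivok (b c : row3) : bool :=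
  let: (b0, b1, b2) := b in let: (c0, c1, c2) := c in
  ~~ (~~ b0 && ~~ c0) && ~~ (~~ b2 && ~~ c2).

Definition rows : seq row3 :=
  [:: (false, false, false); (true, false, false); (false, true, false); (true, true, false);
      (false, false, true); (true, false, true); (false, true, true); (true, true, true)].
Lemma rowsP x : x \in rows. Proof. by case: x => [[[] []] []]. Qed.

Lemma all1 (P : row3 -> bool) : all P rows -> forall a, P a.
Proof. by move/allP=> H a; apply: H; apply: rowsP. Qed.
Lemma all2 (P : row3 -> row3 -> bool) :
  all (fun a => all (fun b => P a b) rows) rows -> forall a b, P a b.
Proof. by move=> H a b; apply: (all1 (all1 H a)). Qed.
Lemma all3 (P : row3 -> row3 -> row3 -> bool) :
  all (fun a => all (fun b => all (fun c => P a b c) rows) rows) rows -> forall a b c, P a b c.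
Proof. by move=> H a b c; apply: (all1 (all1 (all1 H a) b)). Qed.

Definition A3 (P : row3 -> row3 -> row3 -> bool) :=
  all (fun a => all (fun b => all (fun c => P a b c) rows) rows) rows.
Definition A2 (P : row3 -> row3 -> bool) := all (fun a => all (fun b => P a b) rows) rows.

Lemma chkF : A3 (fun a b c => valid3 a b c ==> (Fv a b + rc b <= Fv b c + 2)).
Proof. by vm_compute. Qed.
Lemma chkQ : A3 (fun a b c => valid3 a b c ==> (Qv b c + rc b <= Qv a b + 2)).
Proof. by vm_compute. Qed.
Lemma chkF0 : all (fun y => 3 <= Fv zr y) rows. Proof. by vm_compute. Qed.
Lemma chkQ0 : all (fun y => 3 <= Qv y zr) rows. Proof. by vm_compute. Qed.
Lemma chkS : A2 (fun a b => valid3 zr a b ==> (7 <= rc a + Qv a b) ==>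
  (a == (true, true, true)) && (b == (true, false, true))).
Proof. by vm_compute. Qed.
Lemma chk2 : A3 (fun a b c => [&& a != zr, b != zr, c != zr, valid3 a b c, good a b & good b c]
   ==> (rc b == 2)).
Proof. by vm_compute. Qed.
Lemma chk3 : A2 (fun b c => [&& b != zr, c != zr & good b c] ==> ~~ blk b c && ivok b c).
Proof. by vm_compute. Qed.

Lemma stepF a b c : valid3 a b c -> Fv a b + rc b <= Fv b c + 2.
Proof. by move=> v; move: (all3 chkF a b c) => /= /implyP; apply. Qed.
Lemma stepQ a b c : valid3 a b c -> Qv b c + rc b <= Qv a b + 2.
Proof. by move=> v; move: (all3 chkQ a b c) => /= /implyP; apply. Qed.
Lemma F0 y : 3 <= Fv zr y.
Proof. exact: (all1 chkF0). Qed.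
Lemma Q0 x : 3 <= Qv x zr.
Proof. exact: (all1 chkQ0). Qed.
Lemma startchk a b : valid3 zr a b -> 7 <= rc a + Qv a b ->
  (a = (true, true, true)) /\ (b = (true, false, true)).
Proof.
move=> H1 H2; move: (all2 chkS a b) => /= /implyP /(_ H1) /implyP /(_ H2).
by case/andP => /eqP -> /eqP ->.
Qed.
Lemma good2 a b c : a != zr -> b != zr -> c != zr -> valid3 a b c -> good a b -> good b c ->
  rc b = 2.
Proof.
move=> Ha Hb Hc Hv G1 G2; move: (all3 chk2 a b c) => /= /implyP H; apply/eqP; apply: H.
by rewrite Ha Hb Hc Hv G1 G2.
Qed.
Lemma good3 b c : b != zr -> c != zr -> good b c -> ~~ blk b c /\ ivok b c.
Proof.
move=> *; move: (all2 chk3 b c) => /= /implyP H.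
have /andP[] // : ~~ blk b c && ivok b c by apply: H; apply/and3P; split.
Qed.

Section Inv.
Variables (h : nat) (W : word h 3).
Hypothesis Hv : forall i, i < h -> valid3 (pre W i) (rw W i) (rw W i.+1).

Lemma fwd k : k <= h -> 3 + \sum_(0 <= i < k) rc (rw W i) <= Fv (pre W k) (rw W k) + 2 * k.
Proof.
elim: k => [_|k IH hk]; first by rewrite big_geq //=; have := F0 (rw W 0); lia.
have -> : \sum_(0 <= i < k.+1) rc (rw W i) = \sum_(0 <= i < k) rc (rw W i) + rc (rw W k)
  by rewrite big_nat_recr.
change (pre W k.+1) with (rw W k).
have := IH (ltnW hk); have := stepF (Hv hk); lia.
Qed.

Lemma bwd d k : k + d = h ->
  \sum_(k <= i < h) rc (rw W i) + 3 <= Qv (pre W k) (rw W k) + 2 * (h - k).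
Proof.
elim: d k => [|d IH] k hk.
  rewrite addn0 in hk; subst k; rewrite big_geq // rw_oob // subnn.
  by have := Q0 (pre W h); lia.
have hk' : k < h by lia.
have -> : \sum_(k <= i < h) rc (rw W i) = rc (rw W k) + \sum_(k.+1 <= i < h) rc (rw W i)
  by rewrite big_ltn.
have := IH k.+1 ltac:(lia); change (pre W k.+1) with (rw W k); have := stepQ (Hv hk'); lia.
Qed.
End Inv.

Definition Vf h (i j : nat) : bool := (i == 0) || (i == h.-1) || (j != 1).
Definition Vw h : word h 3 := (\matrix_(i < h, j < 3) Vf h i j)%R.

Lemma cell_V h i j : cell (Vw h) i j = [&& i < h, j < 3 & ((i == 0) || (i == h.-1) || (j != 1))].
Proof.
rewrite /cell; case: insubP => [a ha <-|/negbTE ->] //.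
case: insubP => [b hb <-|/negbTE ->]; last by rewrite andbF.
by rewrite mxE !ltn_ord.
Qed.

Lemma rwV h i : rw (Vw h) i = if i < h then (true, (i == 0) || (i == h.-1), true) else zr.
Proof. by rewrite /rw !cell_V; case: (i < h) => //=; rewrite !orbT orbF. Qed.

Lemma inW2_V h : 3 <= h -> inW2 (Vw h).
Proof.
move=> h3; apply/inW2_rows => i hi.
rewrite /pre; case: i hi => [|i] hi; rewrite !rwV hi;
repeat (case: ifP => ?); repeat (case: eqP => ?); rewrite /=; first [done | exfalso; lia].
Qed.

Lemma nfilled_V h : 3 <= h -> nfilled (Vw h) = 2 * h + 2.
Proof.
case: h => [|[|[|m]]] // _.
rewrite nfilled_rows big_nat_recr // big_nat_recl // !rwV /= ltnS leqnn.
rewrite (@eq_big_nat _ _ _ 0 m.+1 _ (fun _ => 2)).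
  by rewrite sum_nat_const_nat eqxx /=; lia.
move=> i /andP[_ hi]; rewrite !cell_V /Vf /=.
have -> : i.+1 < m.+3 by lia.
by have -> : (i.+1 == m.+2) = false by apply/eqP; lia.
Qed.

Unset Implicit Arguments.


Theorem mainTheorem4 (h : nat) (W : word h 3) :
  (3 <= h)%N -> two_full W ->
  ((forall j : nat, (j < 3)%N -> cell W 0 j = true) /\
   (forall j : nat, (j < 3)%N -> cell W 1 j = (j != 1%N))) /\
  (atomic W ->
   (forall i : 'I_h, (0 < val i)%N -> (val i < h.-1)%N -> row_count W i = 2%N) /\
   (forall i j : nat, (0 < i)%N -> (i < h - 2)%N -> (j < 2)%N ->
      ~~ [&& cell W i j, cell W i j.+1, cell W i.+1 j & cell W i.+1 j.+1]) /\
   (forall i j : nat, (i.+1 < h)%N -> (j = 0%N \/ j = 2%N) ->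
      ~~ (~~ cell W i j && ~~ cell W i.+1 j))).
Proof.
move=> h3 [HW Hmax].
have Hv := (inW2_rows W).1 HW.
have N : 2 * h + 2 <= \sum_(0 <= i < h) rc (rw W i).
  by rewrite -nfilled_rows -(nfilled_V h3); apply: Hmax; apply: inW2_V.
have G k : k <= h -> good (pre W k) (rw W k).
  move=> hk; rewrite /good.
  have := fwd Hv hk; have := bwd Hv (d := h - k) (k := k) ltac:(lia).
  have E : \sum_(0 <= i < h) rc (rw W i) =
     \sum_(0 <= i < k) rc (rw W i) + \sum_(k <= i < h) rc (rw W i).
    by rewrite (@big_cat_nat _ _ _ k).
  rewrite E in N.
  lia.
split.
  have S1 : 7 <= rc (rw W 0) + Qv (rw W 0) (rw W 1).
    have := bwd Hv (d := h - 1) (k := 1) ltac:(lia).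
    have E : \sum_(0 <= i < h) rc (rw W i) =
       rc (rw W 0) + \sum_(1 <= i < h) rc (rw W i) by rewrite big_ltn //; lia.
    rewrite E in N.
    change (pre W 1) with (rw W 0); lia.
  have [E0 E1] := startchk (Hv 0 ltac:(lia)) S1.
  move: E0 E1; rewrite /rw => -[A0 A1 A2] [B0 B1 B2].
  split; case=> [|[|[|j]]] //= _; by rewrite ?A0 ?A1 ?A2 ?B0 ?B1 ?B2.
move=> At.
have NZ := atomic_nz At.
split.
  move=> [i hi] /= i0 ih; rewrite row_count_rw.
  case: i hi i0 ih => [|i] // hi _ ih; change (rc (rw W i.+1) = 2).
  apply: (good2 (a := rw W i) (c := rw W i.+2)).
  - by apply: NZ; lia.
  - by apply: NZ; lia.
  - by apply: NZ; lia.
  - exact: (Hv i.+1 hi).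
  - exact: (G i.+1 (ltnW hi)).
  - exact: (G i.+2 ltac:(lia)).
have G3 i : i.+1 < h -> ~~ blk (rw W i) (rw W i.+1) /\ ivok (rw W i) (rw W i.+1).
  move=> hi; apply: good3; [apply: NZ; lia | apply: NZ; lia | exact: (G i.+1 (ltnW hi))].
split.
  move=> i j i0 ih j2; have [B _] := G3 i ltac:(lia).
  move: B; rewrite /blk /rw.
  case: j j2 => [|[|j]] // _;
  case: (cell W i 0); case: (cell W i 1); case: (cell W i 2);
  case: (cell W i.+1 0); case: (cell W i.+1 1); case: (cell W i.+1 2); by [].
move=> i j hi hj; have [_ B] := G3 i hi.
move: B; rewrite /ivok /rw.
case: hj => ->;
case: (cell W i 0); case: (cell W i 2); case: (cell W i.+1 0); case: (cell W i.+1 2); by [].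
Qed.
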